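(* Let $(X,\mathsf{d}_X)$ be a compact metric space and $\mathfrak{A}=\bigoplus_{k=0}^n M_{m_k}(\mathbb{C})$ with $n\in\mathbb{N}$, $m_k\ge1$. Let $\mu$ be a state of $\mathfrak{A}$, and define $\Delta^{\mathfrak{A}}_\mu:X\to\mathscr{S}(C(X,\mathfrak{A}))$ by $\Delta^{\mathfrak{A}}_\mu(x)=\mu_x$, where $\mu_x(a)=\mu(a(x))$. Then $\Delta^{\mathfrak{A}}_\mu$ is a homeomorphism onto its image for the weak* topology. Furthermore, if $\|\cdot\|_{\mathsf{n}}$ is a norm on $\mathfrak{A}$ (over $\mathbb{R}$ or $\mathbb{C}$) and $M,N>0$ with $M\|\cdot\|_{\mathsf{n}}\le\|\cdot\|_{\mathfrak{A}}\le N\|\cdot\|_{\mathsf{n}}$, then for every $q\in\{C(X),\mathbb{C}\}\cup\mathscr{S}(C(X,\mathfrak{A}))$ and all $x,y\in X$, $$\mathrm{mk}_{\mathsf{L}^{(\mathsf{n}),q}_{\mathsf{d}_X}}(\Delta^{\mathfrak{A}}_\mu(x),\Delta^{\mathfrak{A}}_\mu(y))\le N\,k^{\mathfrak{A}}_\mu\,\mathsf{d}_X(x,y),$$ so $\Delta^{\mathfrak{A}}_\mu$ is $N k^{\mathfrak{A}}_\mu$-Lipschitz.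
   Context: $e_{k,(p,q)}\in\mathfrak{A}$ denotes the matrix unit that is $1$ in row $p$, column $q$ of the $k$-th summand and $0$ elsewhere, and $k^{\mathfrak{A}}_\mu=\sum_{k=0}^n\sum_{p,q=1}^{m_k}|\mu(e_{k,(p,q)})|$. $C(X,\mathfrak{A})$: continuous $\mathfrak{A}$-valued functions with supremum norm; $\mathscr{S}(\cdot)$: state space; $C(X,\mathbb{C}1_{\mathfrak{A}})$: $\mathbb{C}1_{\mathfrak{A}}$-valued functions. $l^{(\mathsf{n})}_{\mathsf{d}_X}(a)=\sup_{x\ne y}\|a(x)-a(y)\|_{\mathsf{n}}/\mathsf{d}_X(x,y)$; $\mathsf{L}^{(\mathsf{n}),C(X)}_{\mathsf{d}_X}(a)=\max\{l^{(\mathsf{n})}_{\mathsf{d}_X}(a),\inf_{b\in C(X,\mathbb{C}1_{\mathfrak{A}})}\|a-b\|\}$, $\mathsf{L}^{(\mathsf{n}),\mathbb{C}}_{\mathsf{d}_X}(a)=\max\{l^{(\mathsf{n})}_{\mathsf{d}_X}(a),\inf_{\lambda\in\mathbb{C}}\|a-\lambda1\|\}$, and for a state $\nu$ of $C(X,\mathfrak{A})$, $\mathsf{L}^{(\mathsf{n}),\nu}_{\mathsf{d}_X}(a)=\max\{l^{(\mathsf{n})}_{\mathsf{d}_X}(a),\|a-\nu(a)1\|\}$. $\mathrm{mk}_{\mathsf{L}}(\varphi,\psi)=\sup\{|\varphi(a)-\psi(a)|: a=a^*,\ \mathsf{L}(a)\le1\}$. *)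

(* Defs.v *)
From HB Require Import structures.
From mathcomp Require Import all_boot all_order all_algebra.
From mathcomp Require Import all_classical all_reals all_analysis.
From mathcomp.real_closed Require Import complex.
Set Implicit Arguments.
Unset Strict Implicit.
Unset Printing Implicit Defensive.
Import Order.TTheory GRing.Theory Num.Theory.
Local Open Scope classical_set_scope.
Local Open Scope ring_scope.

Definition cmod (R : realType) (z : R[i]) : R := Normc.normc z.

Definition alg (R : realType) (n : nat) (m : 'I_n.+1 -> nat) : Type :=
  forall k : 'I_n.+1, 'M[R[i]]_(m k).

Section AlgOps.
Variables (R : realType) (n : nat) (m : 'I_n.+1 -> nat).
Local Notation A := (alg R m).

Definition alg_add (a b : A) : A := fun k => a k + b k.
Definition alg_opp (a : A) : A := fun k => - a k.
Definition alg_sub (a b : A) : A := alg_add a (alg_opp b).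
Definition alg_zero : A := fun k => 0.
Definition alg_one : A := fun k => 1%:M.
Definition alg_scale (c : R[i]) (a : A) : A := fun k => c *: a k.
Definition alg_mul (a b : A) : A := fun k => a k *m b k.
Definition alg_star (a : A) : A :=
  fun k => \matrix_(i, j) conjc (a k j i).

Definition vnorm (p : nat) (v : 'cV[R[i]]_p) : R :=
  Num.sqrt (\sum_(i < p) cmod (v i 0) ^+ 2).
Definition mxopnorm (p : nat) (M : 'M[R[i]]_p) : R :=
  sup [set vnorm (M *m v) | v in [set v : 'cV[R[i]]_p | vnorm v <= 1]].

Definition alg_norm (a : A) : R := \big[Num.max/0]_(k < n.+1) mxopnorm (a k).

Definition matunit (k : 'I_n.+1) (p q : 'I_(m k)) : A :=
  fun k' => \matrix_(i < m k', j < m k')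
     ((k' == k) && (val i == val p) && (val j == val q))%:R.

Definition is_state_alg (mu : A -> R[i]) : Prop :=
  [/\ forall a b, mu (alg_add a b) = mu a + mu b,
      forall (c : R[i]) a, mu (alg_scale c a) = c * mu a,
      forall a, 0 <= mu (alg_mul (alg_star a) a) &
      mu alg_one = 1].

Definition kA (mu : A -> R[i]) : R :=
  \sum_(k < n.+1) \sum_(p < m k) \sum_(q < m k) cmod (mu (matunit p q)).

Variable X : metricType R.

Definition contA (a : X -> A) : Prop :=
  forall x (e : R), 0 < e -> exists2 d : R, 0 < d &
    forall y, mdist x y < d -> alg_norm (alg_sub (a y) (a x)) < e.

Definition fadd (a b : X -> A) : X -> A := fun x => alg_add (a x) (b x).
Definition fsub (a b : X -> A) : X -> A := fun x => alg_sub (a x) (b x).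
Definition fscale (c : R[i]) (a : X -> A) : X -> A := fun x => alg_scale c (a x).
Definition fmul (a b : X -> A) : X -> A := fun x => alg_mul (a x) (b x).
Definition fstar (a : X -> A) : X -> A := fun x => alg_star (a x).
Definition fone : X -> A := fun _ => alg_one.

Definition supnorm (a : X -> A) : R := sup [set alg_norm (a x) | x in [set: X]].

(** states of C(X, A) (functionals are only constrained on C(X, A)) *)
Definition is_state_CXA (phi : (X -> A) -> R[i]) : Prop :=
  [/\ forall a b, contA a -> contA b -> phi (fadd a b) = phi a + phi b,
      forall (c : R[i]) a, contA a -> phi (fscale c a) = c * phi a,
      forall a, contA a -> 0 <= phi (fmul (fstar a) a) &
      phi fone = 1].

Definition Delta (mu : A -> R[i]) (x : X) : (X -> A) -> R[i] :=
  fun a => mu (a x).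

Definition lipn (nn : A -> R) (a : X -> A) : \bar R :=
  ereal_sup [set e | exists x y : X, x <> y /\
                     e = (nn (alg_sub (a x) (a y)) / mdist x y)%:E].

Inductive qparam : Type :=
| qCX : qparam
| qC : qparam
| qState : ((X -> A) -> R[i]) -> qparam.

Definition qparam_valid (q : qparam) : Prop :=
  match q with qState nu => is_state_CXA nu | _ => True end.

Definition qterm (q : qparam) (a : X -> A) : R :=
  match q with
  | qCX => inf [set supnorm (fsub a b) | b in
                 [set b : X -> A | contA b /\
                    exists lam : X -> R[i], forall x, b x = alg_scale (lam x) alg_one]]
  | qC => inf [set supnorm (fsub a (fun _ => alg_scale lam alg_one)) |
                 lam in [set: R[i]]]
  | qState nu => supnorm (fsub a (fun _ => alg_scale (nu a) alg_one))
  end.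

Definition Lq (nn : A -> R) (q : qparam) (a : X -> A) : \bar R :=
  maxe (lipn nn a) (qterm q a)%:E.

Definition mk (L : (X -> A) -> \bar R) (phi psi : (X -> A) -> R[i]) : \bar R :=
  ereal_sup [set (cmod (phi a - psi a))%:E | a in
               [set a : X -> A | [/\ contA a, fstar a = a & (L a <= 1)%E]]].

End AlgOps.

(* Main.v *)
Require Import Defs.
From HB Require Import structures.
From mathcomp Require Import all_boot all_order all_algebra.
From mathcomp Require Import all_classical all_reals all_analysis.
From mathcomp.real_closed Require Import complex.
From mathcomp Require Import ring lra.
Set Implicit Arguments.
Unset Strict Implicit.
Unset Printing Implicit Defensive.
Import Order.TTheory GRing.Theory Num.Theory.
Local Open Scope classical_set_scope.
Local Open Scope ring_scope.

Section Cm.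
Variable R : realType.
Implicit Types z w : R[i].

Lemma cmod_ge0 z : 0 <= cmod z.
Proof. by case: z => a b; rewrite /cmod /= sqrtr_ge0. Qed.

Lemma cmodD z w : cmod (z + w) <= cmod z + cmod w.
Proof. exact: le_normcD. Qed.

Lemma cmodM z w : cmod (z * w) = cmod z * cmod w.
Proof. exact: Normc.normcM. Qed.

Lemma cmodN z : cmod (- z) = cmod z.
Proof. exact: normcN. Qed.

Lemma cmodB z w : cmod (z - w) = cmod (w - z).
Proof. by rewrite -cmodN opprB. Qed.

Lemma cmod_real (r : R) : @cmod R (r%:C)%C = `|r|.
Proof. by rewrite /cmod /= expr0n /= addr0 sqrtr_sqr. Qed.

Lemma cmod0 : @cmod R 0 = 0.
Proof. exact: Normc.normc0. Qed.

Lemma cmod1 : @cmod R 1 = 1.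
Proof. exact: Normc.normc1. Qed.

Lemma cmod_eq0 z : cmod z = 0 -> z = 0.
Proof. exact: Normc.eq0_normc. Qed.

Lemma cmod_nat (b : bool) : @cmod R (b%:R) <= 1.
Proof. by case: b; rewrite ?cmod1 ?cmod0. Qed.

Lemma cmod_sum (I : Type) (r : seq I) (P : pred I) (F : I -> R[i]) :
  cmod (\sum_(i <- r | P i) F i) <= \sum_(i <- r | P i) cmod (F i).
Proof.
elim/big_rec2: _ => [|i y1 y2 _ h]; first by rewrite cmod0.
by apply: le_trans (cmodD _ _) _; rewrite lerD2l.
Qed.
End Cm.

Section Alg.
Variables (R : realType) (n : nat) (m : 'I_n.+1 -> nat).
Local Notation A := (alg R m).
Local Notation cm := (@cmod R).

Lemma alg_ext (a b : A) : (forall k, a k = b k) -> a = b.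
Proof. by move=> h; apply: boolp.functional_extensionality_dep. Qed.

Lemma bigA_eval (I : Type) (r : seq I) (P : pred I) (F : I -> A) k :
  (\big[@alg_add R n m/@alg_zero R n m]_(i <- r | P i) F i) k
    = \sum_(i <- r | P i) F i k.
Proof. by apply: (big_morph (fun b : A => b k)). Qed.

Lemma alg_decomp (a : A) :
  a = \big[@alg_add R n m/@alg_zero R n m]_(k < n.+1)
        \big[@alg_add R n m/@alg_zero R n m]_(p < m k)
        \big[@alg_add R n m/@alg_zero R n m]_(q < m k)
           alg_scale (a k p q) (@matunit R n m k p q).
Proof.
apply: alg_ext => k'; rewrite bigA_eval; apply/matrixP => i j.
rewrite summxE (bigD1 k') //= big1 ?addr0; last first.
  move=> k /negbTE kk'; rewrite bigA_eval summxE big1 // => p _.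
  rewrite bigA_eval summxE big1 // => q _.
  by rewrite /alg_scale /matunit !mxE eq_sym kk' /= mulr0.
rewrite bigA_eval summxE (bigD1 i) //= big1 ?addr0; last first.
  move=> p /negbTE pi; rewrite bigA_eval summxE big1 // => q _.
  rewrite /alg_scale /matunit !mxE eqxx /=.
  suff -> : (val i == val p) = false by rewrite mulr0.
  by apply/negbTE; apply: contraFN pi => /eqP/val_inj ->.
rewrite bigA_eval summxE (bigD1 j) //= big1 ?addr0; last first.
  move=> q /negbTE qj; rewrite /alg_scale /matunit !mxE !eqxx /=.
  suff -> : (val j == val q) = false by rewrite mulr0.
  by apply/negbTE; apply: contraFN qj => /eqP/val_inj ->.
by rewrite /alg_scale /matunit !mxE !eqxx /= mulr1.
Qed.

Variable mu : A -> R[i].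
Hypothesis hmu : is_state_alg mu.

Lemma mu_add a b : mu (alg_add a b) = mu a + mu b.
Proof. by case: hmu. Qed.

Lemma mu_scale c a : mu (alg_scale c a) = c * mu a.
Proof. by case: hmu. Qed.

Lemma mu_zero : mu (@alg_zero R n m) = 0.
Proof.
have -> : @alg_zero R n m = alg_scale 0 (@alg_zero R n m).
  by apply: alg_ext => k; rewrite /alg_scale scale0r.
by rewrite mu_scale mul0r.
Qed.

Lemma mu_one : mu (@alg_one R n m) = 1.
Proof. by case: hmu. Qed.

Lemma mu_sub a b : mu (alg_sub a b) = mu a - mu b.
Proof.
have -> : alg_sub a b = alg_add a (alg_scale (-1) b).
  by apply: alg_ext => k; rewrite /alg_sub /alg_add /alg_opp /alg_scale scaleN1r.
by rewrite mu_add mu_scale mulN1r.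
Qed.

Lemma mu_big (I : Type) (r : seq I) (P : pred I) (F : I -> A) :
  mu (\big[@alg_add R n m/@alg_zero R n m]_(i <- r | P i) F i)
    = \sum_(i <- r | P i) mu (F i).
Proof. exact: (big_morph mu mu_add mu_zero). Qed.

Lemma mu_decomp a : mu a = \sum_(k < n.+1) \sum_(p < m k) \sum_(q < m k)
   a k p q * mu (@matunit R n m k p q).
Proof.
rewrite {1}(alg_decomp a) mu_big; apply: eq_bigr => k _.
rewrite mu_big; apply: eq_bigr => p _.
rewrite mu_big; apply: eq_bigr => q _.
by rewrite mu_scale.
Qed.

End Alg.

Section Norms.
Variable R : realType.
Local Notation cm := (@cmod R).

Lemma sumsq_le (I : Type) (r : seq I) (P : pred I) (F : I -> R) :
  (forall i, 0 <= F i) ->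
  \sum_(i <- r | P i) F i ^+ 2 <= (\sum_(i <- r | P i) F i) ^+ 2.
Proof.
move=> h.
suff : \sum_(i <- r | P i) F i ^+ 2 <= (\sum_(i <- r | P i) F i) ^+ 2
   /\ 0 <= \sum_(i <- r | P i) F i by case.
elim/big_rec2: _ => [|i y1 y2 _ [h1 h2]]; first by rewrite expr0n /= lexx.
have := h i => hi; split; last by rewrite addr_ge0.
nra.
Qed.

Lemma vnorm_ge0 p (v : 'cV[R[i]]_p) : 0 <= vnorm v.
Proof. exact: sqrtr_ge0. Qed.

Lemma vnorm_ge_entry p (v : 'cV[R[i]]_p) i : cm (v i 0) <= vnorm v.
Proof.
rewrite -(ger0_norm (@cmod_ge0 R (v i 0))) -sqrtr_sqr /vnorm; apply: ler_wsqrtr.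
rewrite (bigD1 i) //= lerDl; apply: sumr_ge0 => j _.
by rewrite sqr_ge0.
Qed.

Lemma vnorm_le_sum p (v : 'cV[R[i]]_p) : vnorm v <= \sum_i cm (v i 0).
Proof.
have h0 : 0 <= \sum_i cm (v i 0) by apply: sumr_ge0 => i _; exact: cmod_ge0.
rewrite -(ger0_norm h0) -sqrtr_sqr /vnorm; apply: ler_wsqrtr.
by apply: sumsq_le => i; exact: cmod_ge0.
Qed.

Definition msum p (M : 'M[R[i]]_p) : R := \sum_i \sum_j cm (M i j).

Lemma msum_ge0 p (M : 'M[R[i]]_p) : 0 <= msum M.
Proof. by apply: sumr_ge0 => i _; apply: sumr_ge0 => j _; exact: cmod_ge0. Qed.

Lemma mulmx_bound p (M : 'M[R[i]]_p) v :
  vnorm (M *m v) <= msum M * vnorm v.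
Proof.
apply: le_trans (vnorm_le_sum _) _.
rewrite /msum mulr_suml; apply: ler_sum => i _.
rewrite mxE; apply: le_trans (cmod_sum _ _ _) _.
rewrite mulr_suml; apply: ler_sum => j _.
rewrite cmodM; apply: ler_wpM2l; first exact: cmod_ge0.
exact: vnorm_ge_entry.
Qed.

Lemma opnorm_set_ne p (M : 'M[R[i]]_p) :
  [set vnorm (M *m v) | v in [set v : 'cV[R[i]]_p | vnorm v <= 1]] !=set0.
Proof.
exists (vnorm (M *m 0)); exists 0 => //=.
apply: le_trans (vnorm_le_sum _) _.
by rewrite big1 ?ler01 // => i _; rewrite mxE cmod0.
Qed.

Lemma opnorm_ub p (M : 'M[R[i]]_p) :
  ubound [set vnorm (M *m v) | v in [set v : 'cV[R[i]]_p | vnorm v <= 1]] (msum M).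
Proof.
move=> y [v /= hv <-]; apply: le_trans (mulmx_bound _ _) _.
by rewrite -[X in _ <= X]mulr1; apply: ler_wpM2l => //; exact: msum_ge0.
Qed.

Lemma opnorm_le p (M : 'M[R[i]]_p) : mxopnorm M <= msum M.
Proof. rewrite /mxopnorm; apply: ge_sup. exact: opnorm_set_ne. exact: opnorm_ub. Qed.

Lemma opnorm_ge p (M : 'M[R[i]]_p) v : vnorm v <= 1 -> vnorm (M *m v) <= mxopnorm M.
Proof.
move=> hv; rewrite /mxopnorm; apply: (ub_le_sup); first by exists (msum M); exact: opnorm_ub.
by exists v.
Qed.

Lemma entry_le_opnorm p (M : 'M[R[i]]_p) i j : cm (M i j) <= mxopnorm M.
Proof.
have -> : M i j = (M *m @delta_mx _ p 1 j 0) i 0 by rewrite -colE mxE.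
apply: le_trans (vnorm_ge_entry _ _) _; apply: opnorm_ge.
apply: le_trans (vnorm_le_sum _) _.
rewrite (bigD1 j) //= big1 ?addr0.
  by rewrite mxE; exact: cmod_nat.
by move=> k /negbTE kj; rewrite mxE kj andFb cmod0.
Qed.

End Norms.

Section AN.
Variables (R : realType) (n : nat) (m : 'I_n.+1 -> nat).
Local Notation A := (alg R m).
Local Notation cm := (@cmod R).

Lemma alg_norm_ge (a : A) k : mxopnorm (a k) <= alg_norm a.
Proof. by rewrite /alg_norm (bigD1 k) //= le_max lexx. Qed.

Lemma alg_norm_ge0 (a : A) : 0 <= alg_norm a.
Proof. by rewrite /alg_norm; elim/big_rec: _ => // k x _ hx; rewrite le_max hx orbT. Qed.

Lemma alg_norm_le (a : A) B : 0 <= B -> (forall k, mxopnorm (a k) <= B) ->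
  alg_norm a <= B.
Proof. by move=> h0 hk; rewrite /alg_norm; elim/big_rec: _ => // k x _ hx; rewrite ge_max hk hx. Qed.

Lemma entry_le_alg_norm (a : A) k i j : cm (a k i j) <= alg_norm a.
Proof. exact: le_trans (entry_le_opnorm _ _ _) (alg_norm_ge _ _). Qed.

Lemma mu_bound (mu : A -> R[i]) : is_state_alg mu -> forall a,
  cm (mu a) <= kA mu * alg_norm a.
Proof.
move=> hmu a; rewrite mu_decomp //; apply: le_trans (cmod_sum _ _ _) _.
rewrite /kA mulr_suml; apply: ler_sum => k _.
apply: le_trans (cmod_sum _ _ _) _; rewrite mulr_suml; apply: ler_sum => p _.
apply: le_trans (cmod_sum _ _ _) _; rewrite mulr_suml; apply: ler_sum => q _.
rewrite cmodM mulrC; apply: ler_wpM2l; first exact: cmod_ge0.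
exact: entry_le_alg_norm.
Qed.

Definition C0 : R := \sum_(k < n.+1) msum (1%:M : 'M[R[i]]_(m k)).

Lemma C0_ge0 : 0 <= C0.
Proof. by apply: sumr_ge0 => k _; exact: msum_ge0. Qed.

Lemma alg_norm_scale_one (c : R[i]) :
  alg_norm (alg_scale c (@alg_one R n m)) <= cm c * C0.
Proof.
apply: alg_norm_le; first by rewrite mulr_ge0 ?cmod_ge0 ?C0_ge0.
move=> k; apply: le_trans (opnorm_le _) _.
have -> : msum (alg_scale c (@alg_one R n m) k) = cm c * msum (1%:M : 'M[R[i]]_(m k)).
  rewrite /msum mulr_sumr; apply: eq_bigr => i _; rewrite mulr_sumr.
  by apply: eq_bigr => j _; rewrite /alg_scale /alg_one [in LHS]mxE cmodM.
apply: ler_wpM2l; first exact: cmod_ge0.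
rewrite /C0 (bigD1 k) //= lerDl; apply: sumr_ge0 => k' _; exact: msum_ge0.
Qed.

End AN.

Lemma kA_ge0 (R : realType) (n : nat) (m : 'I_n.+1 -> nat) (mu : alg R m -> R[i]) :
  0 <= kA mu.
Proof.
by apply: sumr_ge0 => k _; apply: sumr_ge0 => p _; apply: sumr_ge0 => q _;
  exact: cmod_ge0.
Qed.

Definition gfun (R : realType) (n : nat) (m : 'I_n.+1 -> nat) (X : metricType R)
  (x0 : X) : X -> alg R m :=
  fun z => alg_scale ((mdist x0 z)%:C)%C (@alg_one R n m).

Lemma gfun_cont (R : realType) (n : nat) (m : 'I_n.+1 -> nat) (X : metricType R)
  (x0 : X) : contA (gfun m x0).
Proof.
move=> x e he.
have hC0 := @C0_ge0 R n m.
have hC : 0 < C0 R m + 1 by lra.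
exists (e / (C0 R m + 1)); first by rewrite divr_gt0.
move=> y hy.
have -> : alg_sub (gfun m x0 y) (gfun m x0 x)
    = alg_scale ((mdist x0 y - mdist x0 x)%:C)%C (@alg_one R n m).
  apply: alg_ext => k.
  by rewrite /alg_sub /alg_add /alg_opp /alg_scale /gfun rmorphB scalerBl.
apply: le_lt_trans (alg_norm_scale_one _ _) _.
rewrite cmod_real.
have ht : `|mdist x0 y - mdist x0 x| <= mdist x y.
  have h1 := metric_triangle x0 x y.
  have h2 := metric_triangle x0 y x.
  have h3 := metric_sym x y.
  rewrite ler_norml; apply/andP; split; lra.
move: hy; rewrite ltr_pdivlMr // => hy.
have := normr_ge0 (mdist x0 y - mdist x0 x).
nra.
Qed.
Theorem proposition3p6 (R : realType) (X : metricType R)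
  (hX : compact [set: X])
  (n : nat) (m : 'I_n.+1 -> nat) (hm : forall k, (0 < m k)%N)
  (mu : alg R m -> R[i]) (hmu : is_state_alg mu) :
  (* Delta_mu maps X into the state space of C(X, A) *)
  (forall x : X, is_state_CXA (Delta mu x))
  (* Delta_mu is injective (states are compared on C(X, A)) *)
  /\ (forall x y : X,
        (forall a, contA a -> Delta mu x a = Delta mu y a) -> x = y)
  (* Delta_mu is continuous from (X, d_X) to the weak* topology:
     preimages of basic weak* neighbourhoods are neighbourhoods *)
  /\ (forall (x : X) (p : nat) (f : 'I_p -> (X -> alg R m)) (e : R),
        (forall i, contA (f i)) -> 0 < e ->
        exists2 d : R, 0 < d & forall y : X, mdist x y < d ->
          forall i, cmod (Delta mu y (f i) - Delta mu x (f i)) < e)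
  (* the inverse of Delta_mu is continuous on the image of Delta_mu
     (with the relative weak* topology) *)
  /\ (forall (x : X) (e : R), 0 < e ->
        exists (p : nat) (f : 'I_p -> (X -> alg R m)),
          (forall i, contA (f i)) /\
          exists2 d : R, 0 < d & forall y : X,
            (forall i, cmod (Delta mu y (f i) - Delta mu x (f i)) < d) ->
            mdist x y < e)
  (* Lipschitz estimate for the Monge-Kantorovich metrics *)
  /\ (forall (nn : alg R m -> R) (M N : R),
        (forall a b, nn (alg_add a b) <= nn a + nn b) ->
        (forall (r : R) a, nn (alg_scale (r%:C)%C a) = `|r| * nn a) ->
        (forall a, nn a = 0 -> a = @alg_zero R n m) ->
        0 < M -> 0 < N ->
        (forall a, M * nn a <= alg_norm a /\ alg_norm a <= N * nn a) ->
        forall q : @qparam R n m X, qparam_valid q ->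
        forall x y : X,
          (mk (Lq nn q) (Delta mu x) (Delta mu y)
             <= (N * kA mu * mdist x y)%:E)%E).
Proof.
split.
  move=> x; split.
  - by move=> a b _ _; exact: mu_add.
  - by move=> c a _; exact: mu_scale.
  - by move=> a _; case: hmu => _ _ hp _; exact: hp.
  - exact: mu_one.
split.
  move=> x y h; have := h (gfun m x) (gfun_cont m x).
  rewrite /Delta /gfun !mu_scale // mu_one // !mulr1 mdistxx.
  by move/complexI/esym/mdist_positivity.
split.
  move=> x p f e hf he.
  have hk0 := kA_ge0 mu.
  have hk : 0 < kA mu + 1 by lra.
  have hep : 0 < e / (kA mu + 1) by rewrite divr_gt0.
  have /boolp.choice [dd hdd] : forall i : 'I_p, exists d : R, 0 < d /\
      forall y, mdist x y < d ->
        alg_norm (alg_sub (f i y) (f i x)) < e / (kA mu + 1).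
    by move=> i; case: (hf i x _ hep) => d h1 h2; exists d.
  exists (\big[Num.min/1]_i dd i).
    by elim/big_rec: _ => // i z _ hz; rewrite lt_min (hdd i).1 hz.
  move=> y hy i.
  have hyi : mdist x y < dd i.
    by apply: lt_le_trans hy _; rewrite (bigD1 i) //= ge_min lexx.
  rewrite /Delta -mu_sub //; apply: le_lt_trans (mu_bound hmu _) _.
  have := (hdd i).2 y hyi; rewrite ltr_pdivlMr // => hh.
  have := alg_norm_ge0 (alg_sub (f i y) (f i x)).
  nra.
split.
  move=> x e he; exists 1%N, (fun _ => gfun m x); split.
    by move=> _; exact: gfun_cont.
  exists e => // y /(_ ord0).
  rewrite /Delta /gfun !mu_scale // mu_one // !mulr1 mdistxx rmorph0 subr0.
  by rewrite cmod_real ger0_norm ?mdist_ge0.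
move=> nn M N hadd hsc hz hM hN hnorm q hq x y.
apply: ge_ereal_sup => _ [a [ha hstar hL] <-]; rewrite lee_fin.
have hk0 := kA_ge0 mu.
case: (eqVneq x y) => [<-|hxy].
  rewrite subrr cmod0; apply: mulr_ge0; last exact: mdist_ge0.
  by apply: mulr_ge0 => //; exact: ltW.
have hl : (lipn nn a <= 1)%E by move: hL; rewrite /Lq ge_max => /andP [].
have hd : 0 < mdist x y by rewrite mdist_gt0.
have h1 : nn (alg_sub (a x) (a y)) <= mdist x y.
  have : ((nn (alg_sub (a x) (a y)) / mdist x y)%:E <= 1)%E.
    apply: le_trans hl; apply: ereal_sup_ubound.
    by exists x, y; split => //; exact/eqP.
  by rewrite lee_fin ler_pdivrMr // mul1r.
rewrite /Delta -mu_sub //; apply: le_trans (mu_bound hmu _) _.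
have h2 := (hnorm (alg_sub (a x) (a y))).2.
have hkN : 0 <= kA mu * N by apply: mulr_ge0 => //; exact: ltW.
have := alg_norm_ge0 (alg_sub (a x) (a y)).
nra.
Qed.
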